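(* Let $G$ be a graph on $n$ vertices with $\mu(G)<\delta(G)$. Then $n\ge 2\delta(G)-3$. If moreover $n=2\delta(G)-3$, then $\mu(G)=\delta(G)-1$.
   Context: All graphs are finite and simple; $\delta(G)$ is the minimum degree. For a graph $G=(V,E)$ on $n$ vertices, a fractional vertex cover is a function $f:V\to[0,\infty)$ with $f(u)+f(v)\ge 1$ for every edge $uv\in E$; $\tau^*(G)$ denotes the minimum of $\sum_{v\in V}f(v)$ over all fractional vertex covers. For $E'\subseteq E$ let $G-E'=(V,E\setminus E')$. Define $\mu(G)=\min\{|E'| : E'\subseteq E,\ \tau^*(G-E')<n/2\}$. *)

(* Defs.v *)
From mathcomp Require Import all_boot all_order all_algebra.
From mathcomp Require Import classical_sets reals.
Set Implicit Arguments. Unset Strict Implicit. Unset Printing Implicit Defensive.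
Import Order.TTheory GRing.Theory Num.Theory.

(* A finite simple graph is a symmetric irreflexive relation e on a finType T
   (hypotheses are in the theorem).  Edges are unordered pairs {u,v}. *)
Definition edges (T : finType) (e : rel T) : {set {set T}} :=
  [set [set p.1; p.2] | p in [set p : T * T | e p.1 p.2]].

Definition del_edges (T : finType) (e : rel T) (E' : {set {set T}}) : rel T :=
  fun u v => e u v && ([set u; v] \notin E').

Definition degree (T : finType) (e : rel T) (v : T) : nat := #|[set u | e v u]|.

(* minimum degree (equals 0 for the empty vertex set, which never matters) *)
Definition min_degree (T : finType) (e : rel T) : nat :=
  \big[minn/#|T|]_(v : T) degree e v.

Local Open Scope ring_scope.

Definition frac_cover (R : realType) (T : finType) (e : rel T) (f : T -> R) :=
  (forall v, 0 <= f v) /\ (forall u v, e u v -> 1 <= f u + f v).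

Definition tau_star (R : realType) (T : finType) (e : rel T) : R :=
  inf [set s : R | exists f : T -> R, frac_cover e f /\ s = \sum_(v : T) f v].

Definition is_mu (R : realType) (T : finType) (e : rel T) (m : nat) : Prop :=
  (exists E' : {set {set T}}, E' \subset edges e /\ #|E'| = m /\
      tau_star R (del_edges e E') < (#|T|%:R / 2)) /\
  (forall E' : {set {set T}}, E' \subset edges e ->
      tau_star R (del_edges e E') < (#|T|%:R / 2) -> (m <= #|E'|)%N).

(* Main.v *)
Require Import Defs.
From mathcomp Require Import all_boot all_order all_algebra.
From mathcomp Require Import classical_sets reals.
From mathcomp Require Import zify lra.
Set Implicit Arguments. Unset Strict Implicit. Unset Printing Implicit Defensive.
Import Order.TTheory GRing.Theory Num.Theory.
Lemma arith (k s n d m : nat) : 0 < k -> s < k -> k + s + (d - s - (k - 1)) <= n ->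
  k * ((d - s) + (d - s - (k - 1))) <= 2 * m -> m < d ->
  2 * d <= n + 3 /\ (n + 3 = 2 * d -> m = d.-1).
Proof.
move=> k0 sk hn hm md.
have [sd|ds] := leqP d s; first by lia.
have [x hx] : exists x, x = d - s by eauto.
rewrite -hx in hn hm.
have x1 : 1 <= x by lia.
have [xk|kx] := leqP k x.
  have h2 : k * (x + 1) <= 2 * m.
    apply: leq_trans hm; apply: leq_mul => //; lia.
  exfalso.
  have [k1|k2] := leqP k 1.
    have s0 : s = 0 by lia.
    have ek : k = 1 by lia.
    rewrite ek in h2. lia.
  have : (k - 2) * (x - 1) + 2 * (x + k) <= k * (x+1) + 2 by nia.
  nia.
have e0 : x - (k - 1) = 0 by lia.
have hm' : k * x <= 2 * m by move: hm; rewrite e0 addn0.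
have [x2|x3] := leqP x 2.
  have [x11|x22] := leqP x 1.
    lia.
  have xe : x = 2 by lia. rewrite xe in hm'. lia.
exfalso.
have : (k - 2) * (x - 2) + 2 * (k + x) = k * x + 4 by nia.
nia.
Qed.

Local Open Scope ring_scope.
Definition cnt (T : finType) (A : {set T}) (P : pred T) : nat := (\sum_(x in A) (P x : nat))%N.

Lemma cntD1 (T : finType) (A : {set T}) (P : pred T) v : v \in A ->
  cnt A P = (P v + cnt (A :\ v) P)%N.
Proof.
move=> vA; rewrite /cnt (bigD1 v) //=; congr (_ + _)%N.
by apply: eq_bigl => x; rewrite !inE andbC.
Qed.

Lemma sumD1 (R : numDomainType) (T : finType) (A : {set T}) (h : T -> R) v : v \in A ->
  \sum_(x in A) h x = h v + \sum_(x in A :\ v) h x.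
Proof.
move=> vA; rewrite (bigD1 v) //=; congr (_ + _).
by apply: eq_bigl => x; rewrite !inE andbC.
Qed.

Lemma pairing (R : realDomainType) (T : finType) (h : T -> R) (A : {set T}) :
  \sum_(x in A) h x < 0 ->
  exists c : R, 0 < c /\ (cnt A (fun x => (c <= h x)%R) < cnt A (fun x => (h x <= - c)%R))%N.
Proof.
have [N] := ubnP #|A|; elim: N A => // N IH A hA hs.
have [v0 v0A] : exists v, v \in A.
  apply/set0Pn; apply: contraTneq hs => ->; by rewrite big_set0 ltxx.
case: (@arg_minP _ _ _ v0 (mem A) h v0A) => v vA vmin.
have {}vA : v \in A := vA.
have hv : h v < 0.
  rewrite ltNge; apply: contraTN hs => hv; rewrite -leNgt.
  by apply: sumr_ge0 => x xA; apply: le_trans hv (vmin x xA).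
set a := - h v.
have a0 : 0 < a by rewrite /a oppr_gt0.
have [lt|ge] := ltnP (cnt A (fun x => (a <= h x)%R)) (cnt A (fun x => (h x <= - a)%R)).
  by exists a.
have [w wA hw] : exists2 w, w \in A & a <= h w.
  case: (pickP [pred w in A | (a <= h w)%R]) => [w /andP [wA hw] | none].
    by exists w.
  exfalso; move: ge; rewrite [X in (_ <= X)%N]/cnt big1; last first.
    by move=> x xA; have := none x; rewrite /= xA /= => ->.
  by rewrite (cntD1 _ vA) /= /a opprK lexx.
have wv : w != v.
  apply: contraTneq hw => ->; rewrite -ltNge; apply: lt_trans hv _; by [].
have wAv : w \in A :\ v by rewrite !inE wv.
have hs' : \sum_(x in A :\ v :\ w) h x < 0.
  move: hs; rewrite (sumD1 _ vA) (sumD1 _ wAv) => hs.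
  move: hw; rewrite /a => hw'. lra.
have hA' : (#|A :\ v :\ w| < N)%N.
  move: hA; rewrite (cardsD1 v A) vA (cardsD1 w (A :\ v)) wAv; lia.
have [c [c0 hc]] := IH _ hA' hs'.
exists c; split => //.
have [ca|ac] := leP c a.
  rewrite (cntD1 _ vA) (cntD1 _ wAv) (cntD1 (fun x => (h x <= -c)%R) vA) (cntD1 (fun x => (h x <= -c)%R) wAv) /=.
  move: ca hw; rewrite /a => ca hw.
  have -> : (c <= h v) = false by apply/negbTE; rewrite -ltNge; lra.
  have -> : (c <= h w) = true by lra.
  have -> : (h v <= - c) = true by lra.
  have -> : (h w <= - c) = false by apply/negbTE; rewrite -ltNge; lra.
  lia.
exfalso; move: hc; rewrite [X in (_ < X)%N]/cnt big1 ?ltn0 // => x.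
rewrite !inE => /andP [_ /andP [_ xA]].
have := vmin x xA; move: ac; rewrite /a => ac hx.
by apply/eqP; rewrite eqb0 -ltNge; lra.
Qed.
Local Close Scope ring_scope.
Lemma card_sum (T : finType) (P : pred T) : #|[set y | P y]| = \sum_y (P y : nat).
Proof.
rewrite -sum1_card big_mkcond /=; apply: eq_bigr => y _; rewrite inE; by case: (P y).
Qed.

Lemma sum_in (T : finType) (I : {set T}) (G : T -> T -> bool) :
  \sum_(x in I) \sum_y (G x y : nat) = \sum_x \sum_y (((x \in I) && G x y) : nat).
Proof.
rewrite big_mkcond; apply: eq_bigr => x _; case: (x \in I) => //=.
by rewrite big1.
Qed.

Lemma min_deg_le (T : finType) (e : rel T) v : min_degree e <= degree e v.
Proof.
rewrite /min_degree; elim: (index_enum T) (mem_index_enum v) => //= x r IH.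
rewrite big_cons inE => /orP [/eqP <-|/IH]; first by rewrite geq_minl.
by move=> h; rewrite geq_min h orbT.
Qed.

Lemma comb (T : finType) (e : rel T) (e_sym : symmetric e) (e_irr : irreflexive e)
  (E' : {set {set T}}) (I N : {set T}) :
  E' \subset edges e -> [disjoint I & N] ->
  (forall v u, v \in I -> u \notin N -> e v u -> [set v; u] \in E') ->
  #|N| < #|I| ->
  #|I| + #|N| + (min_degree e - #|N| - (#|I| - 1)) <= #|T| /\
  #|I| * ((min_degree e - #|N|) + (min_degree e - #|N| - (#|I| - 1))) <= 2 * #|E'|.
Proof.
move=> sE dIN KP sk.
set d := min_degree e; set k := #|I|; set s := #|N|; set n := #|T|.
pose a x := \sum_y (((y \in I) && e x y) : nat).
pose b x := \sum_y (((y \notin I) && (y \notin N) && e x y) : nat).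
have P1 : forall x, d <= s + a x + b x.
  move=> x; apply: leq_trans (min_deg_le e x) _.
  have cN : s = \sum_y ((y \in N) : nat).
    by rewrite -card_sum /s; apply: eq_card => y; rewrite inE.
  rewrite /degree card_sum cN /a /b -!big_split /=.
  apply: leq_sum => y _.
  by case: (y \in N); case: (y \in I); case: (e x y).
have P2 : forall x, x \in I -> a x <= k - 1.
  move=> x xI; rewrite /k (cardsD1 x I) xI /= add1n subn1 /= card_sum /a.
  apply: leq_sum => y _; rewrite !inE.
  case: (y =P x) => [->|]; first by rewrite e_irr andbF.
  by case: (y \in I); case: (e x y).
have P0 : k + s <= n.
  have := cardsC (I :|: N); rewrite cardsU (disjoint_setI0 dIN) cards0 subn0 /n /k /s; lia.
have P3 : forall x, b x <= n - k - s.
  move=> x.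
  have -> : n - k - s = #|~: (I :|: N)|.
    have := cardsC (I :|: N); rewrite cardsU.
    rewrite (disjoint_setI0 dIN).
    rewrite cards0 subn0 /n /k /s; lia.
  rewrite card_sum /b; apply: leq_sum => y _; rewrite !inE.
  by case: (y \in N); case: (y \in I); case: (e x y).
have P4 : \sum_(x in I) (a x + 2 * b x) <= 2 * #|E'|.
  pose D x y := e x y && ([set x; y] \in E').
  have Q1 : \sum_x \sum_y (D x y : nat) <= 2 * #|E'|.
    apply: (@leq_trans (\sum_x \sum_(eps in E') ((x \in eps) : nat))).
      apply: leq_sum => x _.
      rewrite -card_sum.
      have -> : \sum_(eps in E') ((x \in eps):nat) = #|[set eps in E' | x \in eps]|.
        rewrite big_mkcond card_sum; apply: eq_bigr => eps _ /=.
        by case: (eps \in E').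
      rewrite -(@card_in_imset _ _ (fun y => [set x; y]) [set y | D x y]).
        apply: subset_leq_card; apply/fintype.subsetP => eps /imsetP [y].
        by rewrite !inE => /andP [_ hE] ->; rewrite hE !inE eqxx.
      move=> y1 y2; rewrite !inE => /andP [h1 _] /andP [h2 _] eq.
      have : y1 \in [set x; y2] by rewrite -eq !inE eqxx orbT.
      rewrite !inE => /orP [/eqP y1x|/eqP //].
      by rewrite y1x e_irr in h1.
    rewrite exchange_big /=.
    apply: (@leq_trans (\sum_(eps in E') 2)); last by rewrite sum_nat_const mulnC.
    apply: leq_sum => eps epsE.
    rewrite -card_sum.
    have -> : [set x | x \in eps] = eps by apply/setP => x; rewrite inE.
    move/fintype.subsetP: sE => /(_ eps epsE) /imsetP [p _ ->].
    by rewrite cards2; case: (_ != _).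
  apply: leq_trans Q1.
  have -> : \sum_(x in I) (a x + 2 * b x) =
     \sum_(x in I) a x + \sum_(x in I) b x + \sum_(x in I) b x.
    by rewrite -!big_split /=; apply: eq_bigr => x _; lia.
  rewrite /a /b (sum_in I (fun x y => (y \in I) && e x y))
    (sum_in I (fun x y => (y \notin I) && (y \notin N) && e x y)).
  rewrite [X in _ + X]exchange_big /= -!big_split /=.
  apply: leq_sum => x _; rewrite -!big_split /=; apply: leq_sum => y _.
  have INd : forall z, z \in I -> z \notin N.
    by move=> z zI; rewrite (disjointFr dIN zI).
  rewrite /D (e_sym y x).
  case exy: (e x y); last by rewrite !andbF.
  case xI: (x \in I); case yI: (y \in I) => /=; rewrite ?andbF ?andbT /=.
  - by rewrite KP // INd.
  - case yN: (y \in N) => //=. by rewrite KP // yN.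
  - case xN: (x \in N) => //=. by rewrite finset.setUC KP // ?xN // e_sym.
  - by [].
have k0 : 0 < k by lia.
have [x0 x0I] : exists x, x \in I by apply/set0Pn; rewrite -card_gt0.
split.
  have := P1 x0; have := P2 x0 x0I; have := P3 x0; move: P0. lia.
apply: leq_trans P4.
rewrite -sum_nat_const; apply: leq_sum => x xI.
have := P1 x; have := P2 x xI; lia.
Qed.

Theorem lemma25 (R : realType) (T : finType) (e : rel T)
  (e_sym : symmetric e) (e_irr : irreflexive e) (m : nat) :
  is_mu R e m -> (m < min_degree e)%N ->
  (2 * min_degree e <= #|T| + 3)%N /\
  (#|T| + 3 = 2 * min_degree e -> m = (min_degree e).-1)%N.
Proof.
move=> [[E' [sE [cE htau]]] _] md.
set e' := del_edges e E'.
have [f [fc fs]] : exists f : T -> R, frac_cover e' f /\ (\sum_v f v < #|T|%:R / 2)%R.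
  pose S := [set s : R | exists f : T -> R, frac_cover e' f /\ s = (\sum_(v : T) f v)%R]%classic.
  have hinf : has_inf S.
    split.
      exists (\sum_(v : T) (1 : R))%R; exists (fun => 1%R); split => //; split => // u v _.
      by rewrite ler_wpDl.
    exists 0%R => s [g [[g0 _] ->]]; exact: sumr_ge0.
  have := @inf_adherent R S (#|T|%:R / 2 - tau_star R e') _ hinf.
  case.
    by rewrite subr_gt0.
  move=> s [g [gc ->]] hg; exists g; split => //.
  move: hg; rewrite /tau_star -/S; lra.
pose h := fun v => (2 * f v - 1)%R.
have hs : (\sum_(x in [set: T]) h x < 0)%R.
  rewrite (eq_bigl xpredT) => [|x]; last by rewrite inE.
  rewrite /h sumrB -mulr_sumr sumr_const.
  have -> : #|[pred x : T | true]| = #|T| by apply: eq_card.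
  move: fs; lra.
have [c [c0 hc]] := pairing hs.
pose I := [set x | (h x <= -c)%R]; pose N := [set x | (c <= h x)%R].
have cntE : forall P, cnt [set: T] P = #|[set x | P x]|.
  by move=> P; rewrite /cnt card_sum; apply: eq_bigl => x; rewrite inE.
have hsk : (#|N| < #|I|)%N by move: hc; rewrite !cntE.
have dIN : [disjoint I & N].
  rewrite disjoint_subset; apply/fintype.subsetP => x; rewrite !inE => hx. move: hx; rewrite /h => hx.
  rewrite -ltNge; lra.
have KP : forall v u, v \in I -> u \notin N -> e v u -> [set v; u] \in E'.
  move=> v u; rewrite !inE => hv hu evu; apply: contraNT hu => hE.
  have := fc.2 v u; rewrite /e' /del_edges evu hE => /(_ isT) h1.
  rewrite /h in hv *; lra.
have [h1 h2] := comb e_sym e_irr sE dIN KP hsk.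
rewrite cE in h2.
apply: (arith _ _ h1 h2 md); lia.
Qed.
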